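(* Fix $n\in\mathbb N$ and $x\in\mathbb P^d_K(\mathbb C_p)$, and let $C=\{U\in T_{O_K/\pi^n}(\Lambda^{(n)}):x\in Y_U\}$ with the induced order. If $C$ is nonempty, its order complex $C^\bullet$ is contractible.
   Context: $K$ finite over $\mathbb Q_p$, $O_K$, uniformizer $\pi$, $O$ the integers of $\mathbb C_p$, $\Lambda=\bigoplus_{i=0}^dO_Ke_i$, $\Lambda^{(n)}=\Lambda/\pi^n\Lambda$. For an $O_K/\pi^n$-submodule $U\subset\Lambda^{(n)}$ let $\mathrm{rk}(U)=\dim_{O_K/\pi}(U+\pi\Lambda^{(n)})/\pi\Lambda^{(n)}$ and $\mathrm{rk}'(U)$ the minimal number of generators. $T_{O_K/\pi^n}(\Lambda^{(n)})$ is the poset under inclusion of submodules $U$ with $\mathrm{rk}(U)\ge1$ and $\mathrm{rk}'(U)\le d$. For $x$ with line $L_x\subset\mathbb C_p^{d+1}$, $\mathrm{red}_n(x)=(L_x\cap(\Lambda\otimes O))\otimes O/\pi^nO$, and $Y_U=\{x:\mathrm{red}_n(x)\subset U\otimes_{O_K/\pi^n}O/\pi^nO\}$. The order complex of a poset has chains $x_0\prec\cdots\prec x_m$ as $m$-simplices. *)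

(* Defs.v *)
From HB Require Import structures.
From mathcomp Require Import all_boot all_order all_algebra.
From mathcomp Require Import all_classical all_reals all_analysis.
From mathcomp Require Import Rstruct Rstruct_topology.
Set Implicit Arguments. Unset Strict Implicit. Unset Printing Implicit Defensive.
Import Order.TTheory GRing.Theory Num.Theory.
Local Open Scope classical_set_scope.
Local Open Scope ring_scope.

Definition DVR_uniformizer (OK : idomainType) (pi : OK) : Prop :=
  pi != 0 /\ pi \notin GRing.unit /\
  forall a : OK, a != 0 -> exists (k : nat) (u : OK), u \is a GRing.unit /\ a = u * pi ^+ k.

Definition finite_residue (OK : idomainType) (pi : OK) : Prop :=
  exists s : seq OK, forall a : OK, exists2 b, b \in s & exists c, a - b = pi * c.

(* O is a valuation subring of C containing the (injective) image of O_K,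
   in which pi is not a unit. *)
Definition integers_ext (OK : idomainType) (pi : OK) (C : fieldType) (O : set C)
    (iota : {rmorphism OK -> C}) : Prop :=
  O 0 /\ O 1 /\ (forall a b, O a -> O b -> O (a - b)) /\ (forall a b, O a -> O b -> O (a * b)) /\
  (forall z, z != 0 -> O z \/ O z^-1) /\
  injective iota /\ (forall a, O (iota a)) /\ ~ O (iota pi)^-1.

(* A submodule U of Lambda^{(n)} = Lambda / pi^n Lambda is represented by its
   preimage in Lambda, i.e. an O_K-submodule of Lambda containing pi^n Lambda. *)
Definition is_submod (OK : idomainType) (d : nat) (U : set 'rV[OK]_(d.+1)) : Prop :=
  U 0 /\ (forall v w, U v -> U w -> U (v + w)) /\ (forall (a : OK) v, U v -> U (a *: v)).

Definition submod_n (OK : idomainType) (pi : OK) (d n : nat) (U : set 'rV[OK]_(d.+1)) : Prop :=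
  is_submod U /\ forall v, U (pi ^+ n *: v).

(* U / (a Lambda) (more precisely (U + a Lambda)/a Lambda) is generated by (the
   images of) m elements of U *)
Definition gen_mod (OK : idomainType) (d : nat) (a : OK) (U : set 'rV[OK]_(d.+1)) (m : nat) : Prop :=
  exists u : 'I_m -> 'rV[OK]_(d.+1), (forall i, U (u i)) /\
    forall v, U v -> exists (c : 'I_m -> OK) (r : 'rV[OK]_(d.+1)),
      v = \sum_(i < m) c i *: u i + a *: r.

(* rk(U) >= 1 : the O_K/pi-dimension of (U + pi Lambda^{(n)})/pi Lambda^{(n)},
   i.e. its minimal number of generators, is not 0 *)
Definition rk_ge1 (OK : idomainType) (pi : OK) (d : nat) (U : set 'rV[OK]_(d.+1)) : Prop :=
  ~ gen_mod pi U 0.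

(* rk'(U) <= d : U is generated by d elements as an O_K/pi^n-module *)
Definition rk'_le (OK : idomainType) (pi : OK) (d n : nat) (U : set 'rV[OK]_(d.+1)) (m : nat) : Prop :=
  gen_mod (pi ^+ n) U m.

Definition in_T (OK : idomainType) (pi : OK) (d n : nat) (U : set 'rV[OK]_(d.+1)) : Prop :=
  submod_n pi n U /\ rk_ge1 pi U /\ rk'_le pi n U d.

Definition inO (C : fieldType) (O : set C) (d : nat) (w : 'rV[C]_(d.+1)) : Prop :=
  forall i, O (w 0 i).

(* preimage in Lambda (x) O = O^{d+1} of U (x)_{O_K/pi^n} O/pi^n O, viewed (by
   flatness) as the image of U (x) O in (O/pi^n O)^{d+1} *)
Definition UO (OK : idomainType) (pi : OK) (C : fieldType) (O : set C)
    (iota : {rmorphism OK -> C}) (d n : nat) (U : set 'rV[OK]_(d.+1)) : set 'rV[C]_(d.+1) :=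
  [set w | exists (m : nat) (u : 'I_m -> 'rV[OK]_(d.+1)) (c : 'I_m -> C) (r : 'rV[C]_(d.+1)),
     [/\ (forall i, U (u i)), (forall i, O (c i)), inO O r &
         w = \sum_(i < m) c i *: map_mx iota (u i) + (iota pi) ^+ n *: r]].

(* x in Y_U, where x in P^d(C) is represented by a nonzero vector of C^{d+1}
   spanning the line L_x: red_n(x) = (L_x cap O^{d+1}) mod pi^n is contained in
   U (x) O/pi^n O. *)
Definition in_Y (OK : idomainType) (pi : OK) (C : fieldType) (O : set C)
    (iota : {rmorphism OK -> C}) (d n : nat) (U : set 'rV[OK]_(d.+1)) (x : 'rV[C]_(d.+1)) : Prop :=
  forall w : 'rV[C]_(d.+1), (exists c : C, w = c *: x) -> inO O w -> UO pi O iota n U w.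

Local Notation RR := Rdefinitions.R.

(* geometric realization of the order complex of the poset (P, le): the points
   are the finitely supported functions f : X -> [0,1] with sum 1 whose support
   is a (finite) chain of P; topology = subspace of the product topology
   (which is the usual topology for finite posets). *)
Definition order_complex_realization (X : Type) (P : set X) (le : X -> X -> Prop)
    : set {ptws X -> RR} :=
  [set f | exists (k : nat) (s : 'I_k -> X),
     injective s /\ (forall i, P (s i)) /\
     (forall i j, le (s i) (s j) \/ le (s j) (s i)) /\
     (forall a, f a <> 0 -> exists i, a = s i) /\
     (forall a, 0 <= f a) /\
     \sum_(i < k) f (s i) = 1].

Definition contractible (T : topologicalType) (A : set T) : Prop :=
  exists a : T, A a /\
  exists H : RR * T -> T,
    [/\ {within [set p | 0 <= p.1 <= 1 /\ A p.2], continuous H},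
        (forall t y, 0 <= t <= 1 -> A y -> A (H (t, y))),
        (forall y, A y -> H (0, y) = y) &
        (forall y, A y -> H (1, y) = a)].

(* Main.v *)
Require Import Defs.
From HB Require Import structures.
From mathcomp Require Import all_boot all_order all_algebra.
From mathcomp Require Import all_classical all_reals all_analysis.
From mathcomp Require Import Rstruct Rstruct_topology.
From mathcomp Require Import ring lra zify.
Import Order.TTheory GRing.Theory Num.Theory.
Local Open Scope classical_set_scope.
Local Open Scope ring_scope.
Set Implicit Arguments. Unset Strict Implicit. Unset Printing Implicit Defensive.
Lemma dominant_nat (T : Type) (r : T -> T -> Prop)
  (rtot : forall a b, r a b \/ r b a)
  (rtr : forall a b c, r a b -> r b c -> r a c) (f : nat -> T) (m : nat) :
  exists j, (j <= m)%N /\ forall i, (i <= m)%N -> r (f i) (f j).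
Proof.
elim: m => [|m [j [hj IH]]].
  exists 0%N; split => // i; rewrite leqn0 => /eqP ->.
  by case: (rtot (f 0%N) (f 0%N)).
case: (rtot (f m.+1) (f j)) => h.
  exists j; split; first exact: leqW.
  move=> i; rewrite leq_eqVlt ltnS => /orP [/eqP -> //|]; exact: IH.
exists m.+1; split => // i; rewrite leq_eqVlt ltnS => /orP [/eqP -> |hi].
  by case: (rtot (f m.+1) (f m.+1)).
exact: rtr (IH _ hi) h.
Qed.

Lemma dominant_ord (T : Type) (r : T -> T -> Prop)
  (rtot : forall a b, r a b \/ r b a)
  (rtr : forall a b c, r a b -> r b c -> r a c) (m : nat) (f : 'I_m.+1 -> T) :
  exists j, forall i, r (f i) (f j).
Proof.
have [j [hj H]] := dominant_nat rtot rtr (fun i => f (inord i)) m.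
exists (inord j) => i; have := H i (ltn_ord i); by rewrite inord_val.
Qed.

Lemma dvr_cmp (OK : idomainType) (pi : OK) : DVR_uniformizer pi ->
  forall a b : OK, (exists t, a = t * b) \/ (exists t, b = t * a).
Proof.
move=> [pi0 [piu hdvr]] a b.
have [->|a0] := eqVneq a 0; first by left; exists 0; rewrite mul0r.
have [->|b0] := eqVneq b 0; first by right; exists 0; rewrite mul0r.
have [k [u [uu ->]]] := hdvr a a0; have [l [v [vu ->]]] := hdvr b b0.
case: (leqP l k) => hlk.
  left; exists (u / v * pi ^+ (k - l)).
  rewrite -{1}(subnK hlk) exprD.
  have -> : u / v * pi ^+ (k - l) * (v * pi ^+ l) = u * (pi ^+ (k - l) * pi ^+ l) * (v / v) by ring.
  by rewrite divrr // mulr1.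
right; exists (v / u * pi ^+ (l - k)).
rewrite -{1}(subnK (ltnW hlk)) exprD.
have -> : v / u * pi ^+ (l - k) * (u * pi ^+ k) = v * (pi ^+ (l - k) * pi ^+ k) * (u / u) by ring.
by rewrite divrr // mulr1.
Qed.

Lemma dvr_dominant (OK : idomainType) (pi : OK) (hd : DVR_uniformizer pi)
  (m : nat) (f : 'I_m.+1 -> OK) : exists j, forall i, exists t, f i = t * f j.
Proof.
apply: (dominant_ord (r := fun a b => exists t, a = t * b)).
- exact: dvr_cmp hd.
- move=> a b c [t ->] [s ->]; exists (t * s); by rewrite mulrA.
Qed.

Lemma sum_deltaL (R : pzRingType) n (p : 'I_n) (F : 'I_n -> R) :
  \sum_j (p == j)%:R * F j = F p.
Proof.
rewrite (bigD1 p) //= eqxx mul1r big1 ?addr0 // => j /negPf.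
by rewrite eq_sym => ->; rewrite mul0r.
Qed.
Lemma sum_deltaL2 (R : pzRingType) n (p : 'I_n) (F : 'I_n -> R) :
  \sum_j (j == p)%:R * F j = F p.
Proof.
rewrite (bigD1 p) //= eqxx mul1r big1 ?addr0 // => j /negPf -> ; by rewrite mul0r.
Qed.
Lemma sum_deltaR (R : pzRingType) n (p : 'I_n) (F : 'I_n -> R) :
  \sum_j F j * (j == p)%:R = F p.
Proof.
rewrite (bigD1 p) //= eqxx mulr1 big1 ?addr0 // => j /negPf -> ; by rewrite mulr0.
Qed.

Lemma flat1 (OK : idomainType) (pi : OK) (C : fieldType)
  (iota : {rmorphism OK -> C}) (hd : DVR_uniformizer pi) (hinj : injective iota)
  (m : nat) (al : 'M[OK]_(m, 1)) (c : 'rV[C]_m) :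
  c *m map_mx iota al = 0 ->
  exists B : 'M[OK]_m, B *m al = 0 /\ c *m map_mx iota B = c.
Proof.
move=> hc.
have [al0|] := eqVneq al 0.
  by exists 1%:M; rewrite mul1mx al0 map_mx1 mulmx1.
case: m al c hc => [|m] al c hc alnz.
  by exists 1%:M; rewrite map_mx1 mulmx1 mul1mx; split => //; apply/matrixP => [[]].
have [j0 hj0] := dvr_dominant hd (fun i => al i 0).
have /fin_all_exists [t ht] := hj0.
pose B := \matrix_(p, j) ((p == j)%:R - t p * (j == j0)%:R) : 'M[OK]_m.+1.
have nz0 : al j0 0 != 0.
  apply: contra alnz => /eqP h; apply/eqP/matrixP => i k.
  by rewrite (ord1 k) ht h mulr0 mxE.
have hs : \sum_p c 0 p * iota (t p) = 0.
  have : (c *m map_mx iota al) 0 0 = 0 by rewrite hc mxE.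
  rewrite mxE.
  under eq_bigr => p _ do rewrite mxE ht rmorphM mulrA.
  rewrite -mulr_suml => /eqP; rewrite mulf_eq0 => /orP [/eqP //|].
  by rewrite -(rmorph0 iota) => /eqP /hinj /eqP; rewrite (negPf nz0).
exists B; split.
  apply/matrixP => p k; rewrite !mxE (ord1 k).
  under eq_bigr => j _ do rewrite mxE mulrBl -mulrA.
  rewrite sumrB -mulr_sumr sum_deltaL sum_deltaL2 (ht p); exact: subrr.
apply/matrixP => z j; rewrite (ord1 z) !mxE.
under eq_bigr => p _ do rewrite !mxE rmorphB rmorphM !rmorph_nat mulrBr mulrA.
rewrite sumrB -mulr_suml sum_deltaR hs mul0r subr0 //.
Qed.

Lemma flatN (OK : idomainType) (pi : OK) (C : fieldType)
  (iota : {rmorphism OK -> C}) (hd : DVR_uniformizer pi) (hinj : injective iota)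
  (m N : nat) (A : 'M[OK]_(m, N)) (c : 'rV[C]_m) :
  c *m map_mx iota A = 0 ->
  exists B : 'M[OK]_m, B *m A = 0 /\ c *m map_mx iota B = c.
Proof.
elim: N A => [|N IH] A hc.
  by exists 1%:M; rewrite map_mx1 mulmx1; split => //; apply/matrixP => i [].
pose A' : 'M[OK]_(m, 1 + N) := A.
have h1 : c *m map_mx iota (lsubmx A') = 0.
  by rewrite map_lsubmx mulmx_lsub /A' hc; apply/matrixP => i j; rewrite !mxE.
have h2 : c *m map_mx iota (rsubmx A') = 0.
  by rewrite map_rsubmx mulmx_rsub /A' hc; apply/matrixP => i j; rewrite !mxE.
have [B1 [hB1 hcB1]] := flat1 hd hinj h1.
have h3 : c *m map_mx iota (B1 *m rsubmx A') = 0.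
  by rewrite map_mxM mulmxA hcB1.
have [B2 [hB2 hcB2]] := IH _ h3.
exists (B2 *m B1); split.
  have e : forall X : 'M[OK]_(m, 1 + N), lsubmx X = 0 -> rsubmx X = 0 -> X = 0.
    by move=> X h h'; rewrite -[X]hsubmxK h h' row_mx0.
  apply: (e (B2 *m B1 *m A')).
    by rewrite -mulmx_lsub -mulmxA hB1 mulmx0.
  by rewrite -mulmx_rsub -mulmxA hB2.
by rewrite map_mxM mulmxA hcB2 hcB1.
Qed.

Lemma submod_sum (OK : idomainType) (d m : nat) (U : set 'rV[OK]_(d.+1))
  (hU : is_submod U) (F : 'I_m -> 'rV[OK]_(d.+1)) :
  (forall i, U (F i)) -> U (\sum_(i < m) F i).
Proof.
move: hU => [h0 [hD hZ]] hF.
by apply: (big_ind U) => // i _; apply: hF.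
Qed.

Lemma rows_mul (OK : idomainType) (d m p : nat) (U : set 'rV[OK]_(d.+1))
  (hU : is_submod U) (M : 'M[OK]_(p, m)) (G : 'M[OK]_(m, d.+1)) :
  (forall i, U (row i G)) -> forall i, U (row i (M *m G)).
Proof.
move=> hG i; rewrite row_mul mulmx_sum_row; apply: submod_sum => // j.
by move: hU => [_ [_ hZ]]; apply: hZ.
Qed.

Lemma UO_of_mx (OK : idomainType) (pi : OK) (C : fieldType) (O : set C)
  (iota : {rmorphism OK -> C}) (d n m : nat) (U : set 'rV[OK]_(d.+1))
  (G : 'M[OK]_(m, d.+1)) (cc : 'rV[C]_m) :
  O 0 -> (forall p, U (row p G)) -> (forall p, O (cc 0 p)) ->
  UO pi O iota n U (cc *m map_mx iota G).
Proof.
move=> O0 hG hc; exists m, (fun p => row p G), (fun p => cc 0 p), 0; split => //.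
  by move=> i; rewrite mxE.
rewrite scaler0 addr0 mulmx_sum_row; apply: eq_bigr => p _.
by congr (_ *: _); apply/matrixP => a b; rewrite !mxE.
Qed.

Lemma mx_of_UO (OK : idomainType) (pi : OK) (C : fieldType) (O : set C)
  (iota : {rmorphism OK -> C}) (d n : nat) (U : set 'rV[OK]_(d.+1))
  (w : 'rV[C]_(d.+1)) :
  submod_n pi n U -> UO pi O iota n U w ->
  exists m (G : 'M[OK]_(m, d.+1)) (cc : 'rV[C]_m),
    [/\ (forall p, U (row p G)), (forall p, O (cc 0 p)) & w = cc *m map_mx iota G].
Proof.
move=> [hU hn] [m [u [c [r [hu hc hr ->]]]]].
exists (m + d.+1)%N, (col_mx (\matrix_i u i) (pi ^+ n)%:M), (row_mx (\row_i c i) r).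
split.
- move=> p; case: (split_ordP p) => j ->; first by rewrite rowKu rowK.
  rewrite rowKd.
  have -> : row j ((pi ^+ n)%:M : 'M[OK]_(d.+1)) = pi ^+ n *: row j 1%:M.
    by apply/matrixP => a b; rewrite !mxE mulr_natr.
  exact: hn.
- move=> p; case: (split_ordP p) => j ->; first by rewrite row_mxEl mxE.
  by rewrite row_mxEr; apply: hr.
- rewrite map_col_mx mul_row_col map_scalar_mx mul_mx_scalar rmorphXn.
  congr (_ + _); rewrite mulmx_sum_row; apply: eq_bigr => p _.
  by rewrite mxE; congr (_ *: _); apply/matrixP => a b; rewrite !mxE (ord1 a).
Qed.

Lemma UO_cap (OK : idomainType) (pi : OK) (C : fieldType) (O : set C)
  (iota : {rmorphism OK -> C}) (hd : DVR_uniformizer pi) (hinj : injective iota)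
  (d n : nat) (U V : set 'rV[OK]_(d.+1)) (w : 'rV[C]_(d.+1)) :
  O 0 -> submod_n pi n U -> submod_n pi n V ->
  UO pi O iota n U w -> UO pi O iota n V w -> UO pi O iota n (U `&` V) w.
Proof.
move=> O0 hU hV hwU hwV.
have [m1 [G1 [c1 [hG1 hc1 e1]]]] := mx_of_UO hU hwU.
have [m2 [G2 [c2 [hG2 hc2 e2]]]] := mx_of_UO hV hwV.
pose A := col_mx G1 (- G2).
pose c := row_mx c1 c2.
have hcA : c *m map_mx iota A = 0.
  by rewrite /A /c map_col_mx mul_row_col map_mxN mulmxN -e1 -e2 subrr.
have [B [hB hcB]] := flatN hd hinj hcA.
pose B' : 'M[OK]_(m1 + m2, m1 + m2) := B.
pose BL := lsubmx B'; pose BR := rsubmx B'.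
have hBLR : BL *m G1 = BR *m G2.
  have : B' *m A = 0 by [].
  rewrite -[B']hsubmxK /A mul_row_col mulmxN => /eqP; rewrite subr_eq0 => /eqP.
  by [].
have hcL : c *m map_mx iota BL = c1.
  by rewrite /BL map_lsubmx mulmx_lsub hcB /c row_mxKl.
have -> : w = c *m map_mx iota (BL *m G1) by rewrite map_mxM mulmxA hcL.
apply: UO_of_mx => // [p|p].
  split; first by apply: rows_mul => //; case: hU.
  by rewrite hBLR; apply: rows_mul => //; case: hV.
case: (split_ordP p) => j ->; first by rewrite row_mxEl.
by rewrite row_mxEr.
Qed.

Lemma exists_min (P : nat -> Prop) :
  (exists k, P k) -> exists k, P k /\ forall j, P j -> (k <= j)%N.
Proof.
move=> [k0 hk0]; apply: contrapT => hno.
suff : forall k j, (j <= k)%N -> ~ P j by move/(_ k0 k0 (leqnn _)).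
elim => [|k IH] j.
  by rewrite leqn0 => /eqP -> h0; apply: hno; exists 0%N; split => // j _.
rewrite leq_eqVlt ltnS => /orP [/eqP -> hk|]; last exact: IH.
apply: hno; exists k.+1; split => // j2 hj; rewrite leqNgt; apply/negP => hlt.
by apply: (IH j2) => //; rewrite -ltnS.
Qed.

Lemma sub_gen (OK : idomainType) (pi : OK) (hd : DVR_uniformizer pi) (d n m : nat)
  (u : 'I_m -> 'rV[OK]_(d.+1)) (W : set 'rV[OK]_(d.+1)) :
  is_submod W -> (forall v, W (pi ^+ n *: v)) ->
  (forall w, W w -> exists (c : 'I_m -> OK) r, w = \sum_(i < m) c i *: u i + pi ^+ n *: r) ->
  gen_mod (pi ^+ n) W m.
Proof.
elim: m u W => [|m IH] u W hW hn hgen.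
  exists (fun i => u i); split => [[]//|v hv].
  by have [c [r e]] := hgen v hv; exists c, r.
pose u' i := u (widen_ord (leqnSn m) i); pose ul := u ord_max.
have hgen2 : forall w, W w -> exists (c : 'I_m -> OK) cl r,
    w = \sum_(i < m) c i *: u' i + cl *: ul + pi ^+ n *: r.
  move=> w hw; have [c [r ->]] := hgen w hw.
  by exists (fun i => c (widen_ord (leqnSn m) i)), (c ord_max), r; rewrite big_ord_recr.
pose I cl := exists w, W w /\ exists (c : 'I_m -> OK) r,
    w = \sum_(i < m) c i *: u' i + cl *: ul + pi ^+ n *: r.
have [c0 [w0 [hw0 [[c0' [r0 e0]] hdiv]]]] : exists c0 w0, W w0 /\
    (exists (c : 'I_m -> OK) r, w0 = \sum_(i < m) c i *: u' i + c0 *: ul + pi ^+ n *: r) /\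
    forall cl, I cl -> exists t, cl = t * c0.
  have [[cl [hIcl cl0]]|hno] := pselect (exists cl, I cl /\ cl != 0); last first.
    exists 0, 0; split; first by case: hW.
    split.
      exists (fun=> 0), 0; rewrite big1 ?scale0r ?scaler0 ?addr0 // => i _.
      by rewrite scale0r.
    move=> cl hcl; exists 0; rewrite mul0r; apply: contrapT => hne.
    by apply: hno; exists cl; split => //; apply/eqP.
  move: hd => [pi0 [piu hdvr]].
  have [k1 [v1 [v1u ev1]]] := hdvr cl cl0.
  have [k [[c1 [hIc1 [v [vu ev]]]] hmin]] := exists_min
    (P := fun k => exists c, I c /\ exists v, v \is a GRing.unit /\ c = v * pi ^+ k)
    (ex_intro _ k1 (ex_intro _ cl (conj hIcl (ex_intro _ v1 (conj v1u ev1))))).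
  have [w1 [hw1 [c1' [r1 e1]]]] := hIc1.
  exists c1, w1; split => //; split; first by exists c1', r1.
  move=> cl2 hcl2; have [->|cl20] := eqVneq cl2 0; first by exists 0; rewrite mul0r.
  have [k2 [v2 [v2u ev2]]] := hdvr cl2 cl20.
  have hk : (k <= k2)%N by apply: hmin; exists cl2; split => //; exists v2.
  exists (v2 / v * pi ^+ (k2 - k)); rewrite ev2 ev -{1}(subnK hk) exprD.
  have -> : v2 / v * pi ^+ (k2 - k) * (v * pi ^+ k) = v2 * (pi ^+ (k2 - k) * pi ^+ k) * (v / v) by ring.
  by rewrite divrr // mulr1.
pose W' w := W w /\ exists (c : 'I_m -> OK) r, w = \sum_(i < m) c i *: u' i + pi ^+ n *: r.
have hW' : is_submod W'.
  move: hW => [h0 [hD hZ]]; split; last split.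
  - split => //; exists (fun=> 0), 0; rewrite scaler0 addr0 big1 // => i _; exact: scale0r.
  - move=> v w [hv [cv [rv ev]]] [hw [cw [rw ew]]]; split; first exact: hD.
    exists (fun i => cv i + cw i), (rv + rw); rewrite ev ew scalerDr.
    under [X in _ = X + _]eq_bigr => i _ do rewrite scalerDl.
    rewrite big_split /=; by rewrite addrACA.
  - move=> a v [hv [cv [rv ev]]]; split; first exact: hZ.
    exists (fun i => a * cv i), (a *: rv); rewrite ev scalerDr scaler_sumr.
    congr (_ + _); last by rewrite !scalerA mulrC.
    by apply: eq_bigr => i _; rewrite scalerA.
have hn' : forall v, W' (pi ^+ n *: v).
  move=> v; split; first exact: hn.
  by exists (fun=> 0), v; rewrite big1 ?add0r // => i _; exact: scale0r.
have hgen' : forall w, W' w -> exists (c : 'I_m -> OK) r, w = \sum_(i < m) c i *: u' i + pi ^+ n *: r.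
  by move=> w [].
have [h [hh hgh]] := IH u' W' hW' hn' hgen'.
exists (fun k => if unlift ord_max k is Some i then h i else w0); split.
  move=> k; case: unliftP => [i _|_] //; exact: (hh i).1.
move=> v hv; have [c [cl [r ev]]] := hgen2 v hv.
have [t et] : exists t, cl = t * c0 by apply: hdiv; exists v; split => //; exists c, r.
have hv' : W' (v - t *: w0).
  split.
    move: hW => [_ [hD hZ]]; rewrite -scaleNr; apply: hD => //; exact: hZ.
  exists (fun i => c i - t * c0' i), (r - t *: r0).
  rewrite ev e0 et; apply/matrixP => a b; rewrite !(mxE, summxE).
  under eq_bigr => i _ do rewrite mxE.
  under [X in _ - t * (X + _ + _) = _]eq_bigr => i _ do rewrite mxE.
  under [in RHS]eq_bigr => i _ do rewrite mxE mulrBl.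
  rewrite sumrB.
  have -> : \sum_i (t * c0' i * u' i a b) = t * \sum_i (c0' i * u' i a b).
    by rewrite mulr_sumr; apply: eq_bigr => i _; rewrite mulrA.
  ring.
have [e [r2 e2]] := hgh _ hv'.
exists (fun k => if unlift ord_max k is Some i then e i else t), r2.
rewrite big_ord_recr /= unlift_none.
have hw : forall i : 'I_m, unlift ord_max (widen_ord (leqnSn m) i) = Some i.
  move=> i; have -> : widen_ord (leqnSn m) i = lift ord_max i.
    by apply/val_inj; rewrite /= /bump leqNgt ltn_ord.
  by rewrite liftK.
under eq_bigr => i _ do rewrite hw.
by rewrite addrAC -e2 subrK.
Qed.

Lemma O_facts (OK : idomainType) (pi : OK) (C : fieldType) (O : set C)
  (iota : {rmorphism OK -> C}) : integers_ext pi O iota ->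
  [/\ O 0, O 1, (forall a b, O a -> O b -> O (a + b)), (forall a b, O a -> O b -> O (a * b))
    & forall a, O (iota a)].
Proof.
move=> [hO0 [hO1 [OB [OM [_ [_ [Oi _]]]]]]]; split => // a b ha hb.
have := OB a (0 - b) ha (OB 0 b hO0 hb); by rewrite sub0r opprK.
Qed.

Lemma O_sum (C : fieldType) (O : set C) (hO0 : O 0) (hOD : forall a b, O a -> O b -> O (a + b))
  m (F : 'I_m -> C) : (forall i, O (F i)) -> O (\sum_(i < m) F i).
Proof. by move=> hF; apply: (big_ind O) => // i _; exact: hF. Qed.

Lemma primitive_rep (OK : idomainType) (pi : OK) (C : fieldType) (O : set C)
  (iota : {rmorphism OK -> C}) (d : nat) (x : 'rV[C]_(d.+1)) :
  integers_ext pi O iota -> x != 0 ->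
  exists j, x 0 j != 0 /\ forall i, O (x 0 i / x 0 j).
Proof.
move=> hI hx; have [hO0 hO1 OD OM Oi] := O_facts hI.
move: hI => [_ [_ [_ [_ [Oval _]]]]].
pose rr := fun z w : C => exists c, O c /\ z = c * w.
have rtot : forall z w, rr z w \/ rr w z.
  move=> z w; have [->|z0] := eqVneq z 0; first by left; exists 0; rewrite mul0r.
  have [->|w0] := eqVneq w 0; first by right; exists 0; rewrite mul0r.
  have zw0 : z / w != 0 by rewrite mulf_neq0 ?invr_eq0.
  case: (Oval _ zw0) => h; first by left; exists (z / w); rewrite mulfVK.
  right; exists (w / z); split; last by rewrite mulfVK.
  by move: h; rewrite invf_div.
have rtr : forall a b c, rr a b -> rr b c -> rr a c.
  move=> a b c [s [hs ->]] [t [ht ->]]; exists (s * t); split; [exact: OM | by rewrite mulrA].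
have [j hj] := dominant_ord rtot rtr (fun i => x 0 i).
have x0 : x 0 j != 0.
  apply: contra hx => /eqP h0; apply/eqP/matrixP => a i; rewrite (ord1 a) mxE.
  by have [c [_ ->]] := hj i; rewrite h0 mulr0.
exists j; split => // i; have [c [hc ->]] := hj i; by rewrite mulfK.
Qed.

Lemma rk_from_Y (OK : idomainType) (pi : OK) (C : fieldType) (O : set C)
  (iota : {rmorphism OK -> C}) (d n : nat) (W : set 'rV[OK]_(d.+1)) (x : 'rV[C]_(d.+1)) :
  DVR_uniformizer pi -> integers_ext pi O iota -> submod_n pi n W ->
  in_Y pi O iota n W x -> x != 0 -> rk_ge1 pi W.
Proof.
move=> hd hI [hW hn] hY hx [u0 [_ hg]].
have hdiv : forall v, W v -> exists r, v = pi *: r.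
  by move=> v hv; have [c [r ->]] := hg v hv; exists r; rewrite big_ord0 add0r.
move: (hd) => [pi0 [piu _]].
case: n hn hY => [|k] hn hY.
  have [r hr] := hdiv _ (hn (const_mx 1)).
  move/negP: piu; apply; apply/GRing.unitrPr; exists (r 0 0).
  by have := congr1 (fun M : 'rV[OK]_(d.+1) => M 0 0) hr; rewrite /= !mxE expr0 mul1r => <-.
have [hO0 hO1 OD OM Oi] := O_facts hI.
have [j [xj0 hxj]] := primitive_rep hI hx.
pose x' := (x 0 j)^-1 *: x.
have hx' : UO pi O iota k.+1 W x'.
  apply: hY; first by exists (x 0 j)^-1.
  by move=> i; rewrite /x' mxE mulrC; apply: hxj.
move: hx' => [m [u [c [r [hu hc hr e]]]]].
have /fin_all_exists [ru hru] : forall i : 'I_m, exists r, u i = pi *: r.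
  by move=> i; apply: hdiv.
pose s := \sum_(i < m) c i * iota (ru i 0 j) + iota pi ^+ k * r 0 j.
have hs : iota pi * s = 1.
  have := congr1 (fun M : 'rV[C]_(d.+1) => M 0 j) e; rewrite /x' /= !mxE mulVf // => ->.
  rewrite /s mulrDr mulr_sumr summxE; congr (_ + _).
    apply: eq_bigr => i _; rewrite hru [RHS]mxE [X in _ = _ * X]mxE [X in _ = _ * iota X]mxE rmorphM; ring.
  by rewrite exprS mulrA.
move: hI => [_ [_ [_ [_ [_ [hinj [_ hnot]]]]]]]; apply: hnot.
have ipi0 : iota pi != 0.
  by apply: contra pi0 => /eqP h; apply/eqP; apply: hinj; rewrite h rmorph0.
have -> : (iota pi)^-1 = s by apply: (mulfI ipi0); rewrite hs mulfV.
apply: (OD); last by apply: OM; [rewrite -rmorphXn; apply: Oi | apply: hr].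
by apply: (O_sum hO0 OD) => i; apply: OM; [apply: hc | apply: Oi].
Qed.

Lemma reps (OK : idomainType) (pi : OK) (d : nat) : finite_residue pi ->
  forall n, exists S : seq 'rV[OK]_(d.+1),
    forall v, exists2 s, s \in S & exists r, v = s + pi ^+ n *: r.
Proof.
move=> [s0 hs0].
pose T := [seq (\row_j s0`_(f j) : 'rV[OK]_(d.+1)) | f : {ffun 'I_(d.+1) -> 'I_(size s0)}].
elim => [|n [S hS]].
  by exists [:: 0] => v; exists 0; rewrite ?inE //; exists v; rewrite expr0 scale1r add0r.
exists [seq s + pi ^+ n *: z | s <- S, z <- T] => v.
have [s hsS [r ->]] := hS v.
have /fin_all_exists [b hb] : forall j : 'I_(d.+1), exists b,
    b \in s0 /\ exists c, r 0 j - b = pi * c.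
  by move=> j; have [b hb [c hc]] := hs0 (r 0 j); exists b; split => //; exists c.
have /fin_all_exists [c hc] : forall j : 'I_(d.+1), exists c, r 0 j - b j = pi * c.
  by move=> j; have [_ hc] := hb j.
pose f := [ffun j => Ordinal (etrans (index_mem (b j) s0) (proj1 (hb j)))].
pose z : 'rV[OK]_(d.+1) := \row_j s0`_(f j).
have hz : z \in T by apply: (map_f (fun f : {ffun 'I_(d.+1) -> 'I_(size s0)} => \row_j s0`_(f j) : 'rV[OK]_(d.+1))); rewrite mem_enum.
have ez : forall j, z 0 j = b j by move=> j; rewrite mxE ffunE /= nth_index //; case: (hb j).
exists (s + pi ^+ n *: z); first by apply: allpairs_f.
exists (\row_j c j); rewrite -addrA exprSr -scalerA -scalerDr; congr (_ + _ *: _).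
apply/matrixP => a j; rewrite (ord1 a) !mxE.
have -> : s0`_(f j) = b j by rewrite -(ez j) mxE.
rewrite -hc; ring.
Qed.

Lemma count_sub_eq (T : eqType) (a b : pred T) (s : seq T) :
  subpred a b -> count a s = count b s -> forall x, x \in s -> b x -> a x.
Proof.
move=> hab; elim: s => //= y s IH e x.
have h1 := sub_count hab s.
have h2 : (a y <= b y)%N by case ay: (a y) => //; rewrite (hab y ay).
have e2 : count a s = count b s.
  apply/eqP; rewrite eqn_leq h1 /=; move: e h2; rewrite /=; lia.
rewrite inE => /orP [/eqP -> hby|hx]; last exact: IH.
apply: contraT => hay; move: e; rewrite (negPf hay) hby e2 /=; lia.
Qed.

Lemma min_elem (OK : idomainType) (pi : OK) (d n : nat)
  (CC : set (set 'rV[OK]_(d.+1))) :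
  finite_residue pi -> CC !=set0 -> (forall U, CC U -> submod_n pi n U) ->
  (forall U V, CC U -> CC V -> CC (U `&` V)) ->
  exists U0, CC U0 /\ forall V, CC V -> U0 `<=` V.
Proof.
move=> hfr [U1 hU1] hsub hcap.
have [S hS] := reps d hfr n.
pose mu (U : set 'rV[OK]_(d.+1)) := count (fun v => `[< U v >]) S.
have [k [[U0 [hU0 ek]] hmin]] := exists_min (P := fun k => exists U, CC U /\ mu U = k)
  (ex_intro _ (mu U1) (ex_intro _ U1 (conj hU1 erefl))).
exists U0; split => // V hV.
have hW := hcap _ _ hU0 hV.
have hsp : subpred (fun v => `[< (U0 `&` V) v >]) (fun v => `[< U0 v >]).
  by move=> v /asboolP [h _]; apply/asboolP.
have e : mu (U0 `&` V) = mu U0.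
  apply/eqP; rewrite eqn_leq sub_count //= ek; apply: hmin; by exists (U0 `&` V).
move=> u hu; have [s hs [r er]] := hS u.
have [[h0 [hD hZ]] hn] := hsub _ hU0.
have hsU : U0 s.
  have -> : s = u + (-1) *: (pi ^+ n *: r) by rewrite er scaleN1r addrK.
  by apply: hD => //; apply: hZ.
have /asboolP [_ hsV] := count_sub_eq hsp e hs (introT (asboolP _) hsU).
have [[_ [hDV _]] hnV] := hsub _ hV.
by rewrite er; apply: hDV.
Qed.

Lemma cap_in_C (OK : idomainType) (pi : OK) (C : fieldType) (O : set C)
    (iota : {rmorphism OK -> C}) (d n : nat) (x : 'rV[C]_(d.+1)) :
  DVR_uniformizer pi -> integers_ext pi O iota -> x != 0 ->
  forall U V : set 'rV[OK]_(d.+1),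
  in_T pi n U /\ in_Y pi O iota n U x -> in_T pi n V /\ in_Y pi O iota n V x ->
  in_T pi n (U `&` V) /\ in_Y pi O iota n (U `&` V) x.
Proof.
move=> hd hI hx U V [[hsU [hrU hgU]] hYU] [[hsV _] hYV].
have hO0 : O 0 by case: hI.
have hinj : injective iota by move: hI => [_ [_ [_ [_ [_ [h _]]]]]].
have hsW : submod_n pi n (U `&` V).
  move: hsU hsV => [[a0 [aD aZ]] an] [[b0 [bD bZ]] bn].
  split; last by move=> v; split; [apply: an | apply: bn].
  split; first by split.
  split; first by move=> v w [? ?] [? ?]; split; [apply: aD | apply: bD].
  by move=> a v [? ?]; split; [apply: aZ | apply: bZ].
have hYW : in_Y pi O iota n (U `&` V) x.
  move=> w hw hwO; apply: UO_cap => //; [exact: hYU | exact: hYV].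
split => //; split => //; split; first exact: rk_from_Y hd hI hsW hYW hx.
move: hgU => [u [hu hgu]].
apply: (sub_gen hd (u := u)); [by case: hsW | by case: hsW |].
by move=> w [hwU _]; apply: hgu.
Qed.

Local Notation RR := Rdefinitions.R.

Lemma ptws_cont (X : Type) (T : topologicalType) (H : T -> {ptws X -> RR}) :
  (forall a, continuous (fun p => H p a)) -> continuous H.
Proof.
move=> hc p; apply/cvg_sup => a.
move=> U [?/= [[W oW <-]]] /= Wsfz /filterS; apply; apply: (hc a).
exact: open_nbhs_nbhs.
Qed.
Lemma eval_cont (X : Type) (a : X) : continuous (fun f : {ptws X -> RR} => f a).
Proof. exact: (@proj_continuous {classic X} (fun _ => RR) a). Qed.
Lemma hom_cont (X : Type) (g : X -> RR) :
  continuous (fun p : RR * {ptws X -> RR} => (fun a => (1 - p.1) * p.2 a + p.1 * g a) : {ptws X -> RR}).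
Proof.
apply: ptws_cont => a /=.
have c1 : continuous (fun p : RR * {ptws X -> RR} => p.1) by move=> p; exact: cvg_fst.
have c2 : continuous (fun p : RR * {ptws X -> RR} => p.2 a).
  move=> p; apply: (@continuous_comp _ _ _ (fun p : RR * {ptws X -> RR} => p.2) (fun f : {ptws X->RR} => f a)); [exact: cvg_snd| exact: eval_cont].
move=> p; apply: (@cvgD _ RR^o); [apply: (@cvgM RR); [apply: (@cvgB _ RR^o); [exact: cvg_cst|exact: c1]|exact: c2]|].
apply: (@cvgM RR); [exact: c1|exact: cvg_cst].
Qed.

Unset Implicit Arguments.
Set Strict Implicit.

Theorem mainTheorem13 (OK : idomainType) (pi : OK) (C : fieldType) (O : set C)
    (iota : {rmorphism OK -> C}) (d n : nat) (x : 'rV[C]_(d.+1)) :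
  DVR_uniformizer pi -> finite_residue pi -> integers_ext pi O iota -> x != 0 ->
  let CC := [set U : set 'rV[OK]_(d.+1) | in_T pi n U /\ in_Y pi O iota n U x] in
  CC !=set0 ->
  contractible (order_complex_realization CC (fun U V => U `<=` V)).
Proof.
move=> hd hfr hI hx CC hne.
have [U0 [hU0 hmin]] : exists U0, CC U0 /\ forall V, CC V -> U0 `<=` V.
  apply: (min_elem (n := n) hfr hne).
    by move=> U [[]].
  by move=> U V hU hV; apply: cap_in_C.
pose a : set 'rV[OK]_(d.+1) -> RR := fun U => if `[< U = U0 >] then 1 else 0.
have aU0 : a U0 = 1 by rewrite /a asboolT.
have aN : forall U, U <> U0 -> a U = 0 by move=> U hU; rewrite /a asboolF.
set A := order_complex_realization _ _.
exists a; split.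
  exists 1%N, (fun=> U0); split; first by move=> i j _; rewrite (ord1 i) (ord1 j).
  split => //; split; first by move=> i j; left.
  split; first by move=> U; rewrite /a; case: asboolP => // -> _; exists ord0.
  split; first by move=> U; rewrite /a; case: asboolP => _; lra.
  by rewrite big_ord1 aU0.
exists (fun p : RR * {ptws set 'rV[OK]_(d.+1) -> RR} => (fun U => (1 - p.1) * p.2 U + p.1 * a U) : {ptws set 'rV[OK]_(d.+1) -> RR}).
split.
- apply: continuous_subspaceT; exact: hom_cont.
- move=> t f ht [k [s [sinj [sC [schain [ssupp [fpos fsum]]]]]]].
  have hpos : forall U, 0 <= (1 - t) * f U + t * a U.
    move: ht => /andP [t0 t1] U; apply: addr_ge0; apply: mulr_ge0 => //.
    - by rewrite subr_ge0.
    - by rewrite /a; case: asboolP => _; lra.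
  have hwid : forall i : 'I_k, widen_ord (leqnSn k) i = lift ord_max i.
    by move=> i; apply/val_inj; rewrite /= /bump leqNgt ltn_ord.
  have [[i0 hi0]|hno] := pselect (exists i, s i = U0).
    exists k, s; split => //; split => //; split => //; split.
      move=> U hU; have [hf|hf] := eqVneq (f U) 0.
        have haU : a U <> 0 by move=> h; apply: hU; rewrite /= hf h !mulr0 addr0.
        exists i0; rewrite hi0; apply: contrapT => hne0; apply: haU; exact: aN.
      by apply: ssupp; apply/eqP.
    split => //.
    rewrite big_split /= -!mulr_sumr fsum (bigD1 i0) //= hi0 aU0 big1 ?addr0; first lra.
    move=> i hi; rewrite aN ?mulr0 // => e; move/eqP: hi; apply; apply: sinj.
    by rewrite e hi0.
  pose s' := fun i : 'I_k.+1 => if unlift ord_max i is Some j then s j else U0.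
  have s'max : s' ord_max = U0 by rewrite /s' unlift_none.
  have s'lift : forall j, s' (lift ord_max j) = s j by move=> j; rewrite /s' liftK.
  have hC' : forall i, CC (s' i) by move=> i; rewrite /s'; case: unliftP.
  exists k.+1, s'; split.
    move=> i j; rewrite /s'; case: unliftP => [i1 ->|->]; case: unliftP => [j1 ->|->] //.
    - by move=> e; rewrite (sinj _ _ e).
    - by move=> e; exfalso; apply: hno; exists i1.
    - by move=> e; exfalso; apply: hno; exists j1.
  split => //; split.
    move=> i j; rewrite /s'; case: unliftP => [i1 _|_]; case: unliftP => [j1 _|_] //.
    - by right; apply: hmin.
    - by left; apply: hmin.
    - by left.
  split.
    move=> U hU; have [hf|hf] := eqVneq (f U) 0.
      have haU : a U <> 0 by move=> h; apply: hU; rewrite /= hf h !mulr0 addr0.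
      exists ord_max; rewrite s'max; apply: contrapT => hne0; apply: haU; exact: aN.
    have hfU : f U <> 0 by apply/eqP.
    have [j ->] := ssupp U hfU; exists (lift ord_max j); by rewrite s'lift.
  split => //.
  have fU0 : f U0 = 0.
    apply: contrapT => h; have [j hj] := ssupp _ h; apply: hno; exists j; by rewrite hj.
  rewrite big_ord_recr /= s'max fU0 aU0.
  under eq_bigr => i _ do rewrite hwid s'lift.
  rewrite big_split /= -!mulr_sumr fsum big1 ?mulr0; first lra.
  move=> i _; apply: aN => e; apply: hno; by exists i.
- move=> y hy; apply/funext => U /=; by rewrite subr0 mul1r mul0r addr0.
- move=> y hy; apply/funext => U /=; by rewrite subrr mul0r add0r mul1r.
Qed.
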